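(* Let $T_1,\dots,T_n$ be non-negative, possibly dependent, random variables (component lifetimes) such that the series-system lifetimes below are absolutely continuous. Let $T_D^S$ have survival function $\overline F_D^S(t)=P(T_1>t,\dots,T_n>t)$ and $T_I^S$ have survival function $\overline F_I^S(t)=\prod_{i=1}^n P(T_i>t)$, with failure rates $r_D^S(t)=f_D^S(t)/\overline F_D^S(t)$ and $r_I^S(t)=f_I^S(t)/\overline F_I^S(t)$ (where $f$ denotes the corresponding density), and $r_I^S(t)>0$. Define the relative errors $$E_S^{r}(t)=\frac{r_D^S(t)-r_I^S(t)}{r_I^S(t)},\qquad E_S^{\overline F}(t)=\frac{\overline F_D^S(t)-\overline F_I^S(t)}{\overline F_I^S(t)}.$$ Let $t_0>0$. If $E_S^r(t)\le 0$ (resp. $\ge 0$) for all $t\le t_0$, then $E_S^{\overline F}(t)\ge 0$ (resp. $\le 0$) for $t\le t_0$.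
   Context: $T_D^S$ is the lifetime of the series system with the actual (dependent) components and $T_I^S$ the lifetime of the same series system under the assumption that the components are independent with the same marginals; times $t$ range over $[0,\infty)$. *)

(* Defs.v *)
From HB Require Import structures.
From mathcomp Require Import all_boot all_order all_algebra.
From mathcomp Require Import all_classical all_reals all_analysis.
Set Implicit Arguments. Unset Strict Implicit. Unset Printing Implicit Defensive.
Import Order.TTheory GRing.Theory Num.Theory.
Local Open Scope classical_set_scope.
Local Open Scope ring_scope.

Definition survD d (Omega : measurableType d) (R : realType)
  (P : probability Omega R) (n : nat) (X : 'I_n -> {RV P >-> R}) (t : R) : R :=
  fine (P [set w | forall i, t < X i w]).

Definition survI d (Omega : measurableType d) (R : realType)
  (P : probability Omega R) (n : nat) (X : 'I_n -> {RV P >-> R}) (t : R) : R :=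
  \prod_(i < n) fine (P [set w | t < X i w]).

Definition is_density (R : realType) (f S : R -> R) : Prop :=
  measurable_fun setT f /\ (forall x, 0 <= f x) /\
  forall t, ((S t)%:E = \int[lebesgue_measure]_(x in `]t, +oo[) (f x)%:E)%E.

Definition failure_rate (R : realType) (f S : R -> R) (t : R) : R := f t / S t.

Definition rel_error (R : realType) (a b : R) : R := (a - b) / b.

(* Main.v *)
Require Import Defs.
From HB Require Import structures.
From mathcomp Require Import all_boot all_order all_algebra.
From mathcomp Require Import all_classical all_reals all_analysis.
From mathcomp Require Import ring lra.
Import Order.TTheory GRing.Theory Num.Theory.
Local Open Scope ring_scope.

Module Helpers.
Set Implicit Arguments. Unset Strict Implicit.
Import numFieldNormedType.Exports.
Local Open Scope classical_set_scope.
Local Open Scope ring_scope.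

Section H.
Context {R : realType}.
Notation mu := (@lebesgue_measure R).

Lemma dens_split (f S : R -> R) s u : is_density f S -> s <= u ->
  ((S s - S u)%:E = \int[mu]_(x in `]s,u]) (f x)%:E)%E.
Proof.
move=> [mf [f0 hS]] su.
have E : `]s, +oo[%classic = `]s,u] `|` `]u,+oo[.
  by rewrite -itv_bndbnd_setU// bnd_simp.
have := hS s; rewrite E ge0_integral_setU//=; last 3 first.
- by apply/measurable_realfun.measurable_EFinP; exact: measurable_funS mf.
- by move=> x _; rewrite lee_fin.
- apply/disj_set2P; rewrite -subset0 => z/=; rewrite !in_itv/= => -[/andP[_ zu] /andP[uz _]].
  by move: (lt_le_trans uz zu); rewrite ltxx.
rewrite -hS.
set I := (\int[mu]_(x in _) _)%E.
have I0 : (0 <= I)%E by apply: integral_ge0 => x _; rewrite lee_fin.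
case: I I0 => [r| |] //= _.
  by rewrite -EFinD => -[->]; rewrite addrK.
Qed.

Lemma dens_ge0 (f S : R -> R) x : is_density f S -> 0 <= S x.
Proof.
move=> [mf [f0 hS]]; rewrite -lee_fin hS; apply: integral_ge0 => y _; rewrite lee_fin.
exact: f0.
Qed.

Lemma dens_noninc (f S : R -> R) s u : is_density f S -> s <= u -> S u <= S s.
Proof.
move=> hd su; rewrite -subr_ge0 -lee_fin (dens_split hd su).
by apply: integral_ge0 => y _; rewrite lee_fin; case: hd => _ [f0 _].
Qed.

Lemma dens_cont (f S : R -> R) a b : is_density f S -> a <= b ->
  {within `[a, b], continuous S}.
Proof.
move=> hd ab.
have [mf [f0 hS]] := hd.
have mab : measurable `[a, b]%classic by [].
have intf : mu.-integrable `[a, b] (EFin \o f).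
  apply/integrableP; split.
    by apply/measurable_realfun.measurable_EFinP; exact: measurable_funS mf.
  rewrite (_ : (fun x => _) = (fun x => (f x)%:E)); last first.
    by apply/funext => x /=; rewrite ger0_norm.
  rewrite -integral_itv_obnd_cbnd; last first.
    by apply/measurable_realfun.measurable_EFinP; exact: measurable_funS mf.
  by rewrite -(dens_split hd ab) ltry.
have hc := parameterized_integral_continuous ab intf.
have e : {in `[a, b]%classic, (fun x => S a - parameterized_integral mu a x f) =1 S}.
  move=> x; rewrite inE /= in_itv /= => /andP[ax xb].
  rewrite /parameterized_integral /Rintegral.
  rewrite -integral_itv_obnd_cbnd; last first.
    by apply/measurable_realfun.measurable_EFinP; exact: measurable_funS mf.
  by rewrite -(dens_split hd ax) /= opprB addrC subrK.
apply: (@subspace_eq_continuous R `[a, b]%classic R _ S e).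
apply: within_continuousB => //.
exact: continuous_subspaceT (@cst_continuous _ _ (S a)).
Qed.
End H.

Section P.
Context {R : realType}.

Lemma partition (S : R -> R) t (N : nat) : 0 <= t ->
  {within `[0, t]%classic, continuous S} ->
  (forall x y, 0 <= x -> x <= y -> y <= t -> S y <= S x) ->
  (0 < N)%N -> S t < S 0 ->
  exists tau : nat -> R, [/\ tau 0%N = 0, tau N = t,
    (forall k, 0 <= tau k <= t),
    (forall k, (k <= N)%N -> S (tau k) = S 0 - k%:R * (S 0 - S t) / N%:R) &
    (forall k, (k < N)%N -> tau k <= tau k.+1)].
Proof.
move=> t0 cS mS N0 St0.
set v := fun k : nat => S 0 - k%:R * (S 0 - S t) / N%:R.
have Npos : (0 : R) < N%:R by rewrite ltr0n.
have ex : forall k, exists x, (0 <= x <= t) /\ ((k <= N)%N -> S x = v k).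
  move=> k; have [kN|Nk] := leqP k N; last by exists 0; split => //; rewrite lexx t0.
  have kN' : k%:R <= (N%:R : R) by rewrite ler_nat.
  have hv : Num.min (S 0) (S t) <= v k <= Num.max (S 0) (S t).
    rewrite /Num.min /Num.max ltNge (ltW St0) /=.
    have h1 : 0 <= k%:R * (S 0 - S t) / N%:R.
      by apply: divr_ge0 => //; apply: mulr_ge0 => //; lra.
    have h2 : k%:R * (S 0 - S t) / N%:R <= S 0 - S t.
      rewrite ler_pdivrMr // mulrC ler_pM2l //; lra.
    rewrite /v; apply/andP; split; lra.
  have [c cin Sc] := IVT t0 cS hv.
  exists c; split => //; by move: cin; rewrite in_itv.
have [g hg] := choice ex.
pose tau k := if k == 0%N then 0 else if k == N then t else g k.
have vk k : (k <= N)%N -> S (tau k) = v k.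
  rewrite /tau => kN; case: eqP => [->|_]; first by rewrite /v mul0r mul0r subr0.
  case: eqP => [->|_]; last by apply: (proj2 (hg k)).
  rewrite /v mulrAC divff ?mul1r; first by rewrite opprB addrC subrK.
  by rewrite lt0r_neq0.
have tin k : 0 <= tau k <= t.
  rewrite /tau; case: eqP => _; first by rewrite lexx t0.
  case: eqP => _; first by rewrite lexx t0.
  exact: (proj1 (hg k)).
exists tau; split => //.
- by rewrite /tau (negbTE (lt0n_neq0 N0)) eqxx.
- move=> k kN.
  have [//|ba] := leP (tau k) (tau k.+1).
  have := mS (tau k.+1) (tau k); move: (tin k) (tin k.+1) => /andP[a0 at_] /andP[b0 bt] /(_ b0 (ltW ba) at_).
  rewrite (vk k (ltnW kN)) (vk k.+1 kN) /v -natr1.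
  have : 0 < (S 0 - S t) / N%:R by apply: divr_gt0 => //; lra.
  rewrite !mulrDl mul1r; lra.
Qed.
End P.

Section C.
Context {R : realType}.

Lemma big_N (A B A2 B2 : R) : 0 < B -> 0 < B2 ->
  exists N : nat, [/\ (0 < N)%N, A / N%:R < B & A2 / N%:R < B2].
Proof.
move=> B0 B20.
set M := Num.max (Num.max (A / B) (A2 / B2)) 1.
have hM := archimedean.Num.Theory.truncnS_gt M.
have Np : (0:R) < (Num.truncn M).+1%:R by rewrite ltr0n.
exists (Num.truncn M).+1; split => //.
  rewrite ltr_pdivrMr //.
  have : A / B < (Num.truncn M).+1%:R.
    apply: le_lt_trans hM; by rewrite /M !le_max lexx.
  by rewrite ltr_pdivrMr // mulrC.
rewrite ltr_pdivrMr //.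
have : A2 / B2 < (Num.truncn M).+1%:R.
  apply: le_lt_trans hM; by rewrite /M !le_max lexx !orbT.
by rewrite ltr_pdivrMr // mulrC.
Qed.

Lemma chain1 (S h : R -> R) t c dl : 0 <= t ->
  {within `[0, t]%classic, continuous S} ->
  (forall x y, 0 <= x -> x <= y -> y <= t -> S y <= S x) ->
  0 <= c -> 0 < dl -> (forall x, 0 <= x -> x <= t -> 0 <= h x) ->
  (forall s u, 0 <= s -> s <= u -> u <= t -> S s - S u <= dl ->
     h s * (1 - c * (S s - S u) ^+ 2) <= h u) ->
  h 0 <= h t.
Proof.
move=> t0 cS mS c0 dl0 h0 loc.
have St : S t <= S 0 by apply: mS.
have [St0|] := ltP (S t) (S 0); last first.
  move=> S0t; have E : S 0 = S t by apply/eqP; rewrite eq_le S0t St.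
  have := loc 0 t (lexx 0) t0 (lexx t); rewrite E subrr expr0n /= mulr0 subr0 mulr1.
  by apply; exact: ltW.
set d := S 0 - S t.
have d0 : 0 < d by rewrite /d subr_gt0.
have hz : 0 <= h 0 by apply: h0.
have ht0 : 0 <= h t by apply: h0.
have key : forall N : nat, (0 < N)%N -> d / N%:R < dl ->
    h 0 - h 0 * (c * d ^+ 2 / N%:R) <= h t.
  move=> N N0 dN.
  have Np : (0:R) < N%:R by rewrite ltr0n.
  have [tau [tau0 tauN tin tv tmono]] := partition t0 cS mS N0 St0.
  set x := c * (d / N%:R) ^+ 2.
  have x0 : 0 <= x by rewrite /x mulr_ge0 // sqr_ge0.
  have ind : forall k, (k <= N)%N -> h 0 * (1 - k%:R * x) <= h (tau k).
    elim=> [_|k IH kN]; first by rewrite tau0 mul0r subr0 mulr1.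
    have IH' := IH (ltnW kN).
    have step : h (tau k) * (1 - x) <= h (tau k.+1).
      have e : S (tau k) - S (tau k.+1) = d / N%:R.
        rewrite (tv k (ltnW kN)) (tv k.+1 kN) -/d -natr1.
        rewrite [in RHS]mulrC [in X in _ - X = _]mulrDl mul1r mulrDl; lra.
      have := loc (tau k) (tau k.+1).
      move: (tin k) (tin k.+1) => /andP[a0 at_] /andP[b0 bt].
      rewrite e => /(_ a0 (tmono k kN) bt (ltW dN)); by rewrite -/x.
    have hk1 : 0 <= h (tau k.+1) by move: (tin k.+1) => /andP[b0 bt]; apply: h0.
    have hk : 0 <= h (tau k) by move: (tin k) => /andP[b0 bt]; apply: h0.
    have kx : 0 <= k%:R * x by apply: mulr_ge0.
    rewrite -natr1.
    have [neg|pos] := leP (1 - (k%:R + 1) * x) 0.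
      apply: le_trans hk1; rewrite mulr_ge0_le0 //.
    have p1 : 0 < 1 - x by move: pos; rewrite mulrDl mul1r; lra.
    have p2 : 0 < 1 - k%:R * x by move: pos; rewrite mulrDl mul1r; lra.
    apply: le_trans step.
    apply: le_trans (_ : h 0 * (1 - k%:R * x) * (1 - x) <= _); last first.
      by rewrite ler_pM2r.
    rewrite -mulrA; apply: ler_wpM2l => //.
    have : 0 <= k%:R * x * x by apply: mulr_ge0.
    nra.
  have := ind N (leqnn N); rewrite tauN.
  suff -> : N%:R * x = c * d ^+ 2 / N%:R by rewrite mulrBr mulr1.
  rewrite /x expr_div_n mulrA [N%:R * c]mulrC -!mulrA; congr (c * _).
  field; by rewrite lt0r_neq0.
rewrite leNgt; apply/negP => lt.
have lt' : 0 < h 0 - h t by rewrite subr_gt0.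
have [N [N0 h1 h2]] := big_N (h 0 * (c * d ^+ 2)) d lt' dl0.
have := key N N0 h2.
move: h1; rewrite -mulrA; lra.
Qed.

Lemma chain2 (S h : R -> R) t c dl : 0 <= t ->
  {within `[0, t]%classic, continuous S} ->
  (forall x y, 0 <= x -> x <= y -> y <= t -> S y <= S x) ->
  0 <= c -> 0 < dl -> (forall x, 0 <= x -> x <= t -> 0 <= h x) ->
  (forall s u, 0 <= s -> s <= u -> u <= t -> S s - S u <= dl ->
     h u * (1 - c * (S s - S u) ^+ 2) <= h s) ->
  h t <= h 0.
Proof.
move=> t0 cS mS c0 dl0 h0 loc.
have St : S t <= S 0 by apply: mS.
have [St0|] := ltP (S t) (S 0); last first.
  move=> S0t; have E : S 0 = S t by apply/eqP; rewrite eq_le S0t St.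
  have := loc 0 t (lexx 0) t0 (lexx t); rewrite E subrr expr0n /= mulr0 subr0 mulr1.
  by apply; exact: ltW.
set d := S 0 - S t.
have d0 : 0 < d by rewrite /d subr_gt0.
have hz : 0 <= h 0 by apply: h0.
have ht0 : 0 <= h t by apply: h0.
have key : forall N : nat, (0 < N)%N -> d / N%:R < dl ->
    h t - h t * (c * d ^+ 2 / N%:R) <= h 0.
  move=> N N0 dN.
  have Np : (0:R) < N%:R by rewrite ltr0n.
  have [tau [tau0 tauN tin tv tmono]] := partition t0 cS mS N0 St0.
  set x := c * (d / N%:R) ^+ 2.
  have x0 : 0 <= x by rewrite /x mulr_ge0 // sqr_ge0.
  have ind : forall k, (k <= N)%N -> h (tau k) * (1 - k%:R * x) <= h 0.
    elim=> [_|k IH kN]; first by rewrite tau0 mul0r subr0 mulr1.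
    have IH' := IH (ltnW kN).
    have step : h (tau k.+1) * (1 - x) <= h (tau k).
      have e : S (tau k) - S (tau k.+1) = d / N%:R.
        rewrite (tv k (ltnW kN)) (tv k.+1 kN) -/d -natr1.
        rewrite [in RHS]mulrC [in X in _ - X = _]mulrDl mul1r mulrDl; lra.
      have := loc (tau k) (tau k.+1).
      move: (tin k) (tin k.+1) => /andP[a0 at_] /andP[b0 bt].
      rewrite e => /(_ a0 (tmono k kN) bt (ltW dN)); by rewrite -/x.
    have hk1 : 0 <= h (tau k.+1) by move: (tin k.+1) => /andP[b0 bt]; apply: h0.
    have hk : 0 <= h (tau k) by move: (tin k) => /andP[b0 bt]; apply: h0.
    have kx : 0 <= k%:R * x by apply: mulr_ge0.
    rewrite -natr1.
    have [neg|pos] := leP (1 - (k%:R + 1) * x) 0.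
      by apply: le_trans hz; rewrite mulr_ge0_le0.
    have p1 : 0 < 1 - x by move: pos; rewrite mulrDl mul1r; lra.
    have p2 : 0 < 1 - k%:R * x by move: pos; rewrite mulrDl mul1r; lra.
    apply: le_trans IH'.
    apply: le_trans (_ : h (tau k.+1) * (1 - x) * (1 - k%:R * x) <= _); last first.
      by rewrite ler_pM2r.
    rewrite -mulrA; apply: ler_wpM2l => //.
    have : 0 <= k%:R * x * x by apply: mulr_ge0.
    nra.
  have := ind N (leqnn N); rewrite tauN.
  suff -> : N%:R * x = c * d ^+ 2 / N%:R by rewrite mulrBr mulr1.
  rewrite /x expr_div_n mulrA [N%:R * c]mulrC -!mulrA; congr (c * _).
  field; by rewrite lt0r_neq0.
rewrite leNgt; apply/negP => lt.
have lt' : 0 < h t - h 0 by rewrite subr_gt0.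
have [N [N0 h1 h2]] := big_N (h t * (c * d ^+ 2)) d lt' dl0.
have := key N N0 h2.
move: h1; rewrite -mulrA; lra.
Qed.

End C.

Section A.
Context {R : realType}.

Lemma inv_sq_le (T b : R) : 0 < T -> T <= b -> (b ^+ 2)^-1 <= (T ^+ 2)^-1.
Proof.
move=> T0 Tb; have b0 : 0 < b by apply: lt_le_trans Tb.
rewrite lef_pV2 ?posrE ?exprn_gt0 //.
by rewrite ler_pXn2r // ?nnegrE ltW.
Qed.

Lemma arith1 (Ds Du a b T : R) : 0 < T -> T <= b -> b <= a -> 0 <= Ds ->
  Ds - Du <= Ds / b * (a - b) ->
  Ds / a * (1 - (T ^+ 2)^-1 * (a - b) ^+ 2) <= Du / b.
Proof.
move=> T0 Tb ba Ds0 H.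
have b0 : 0 < b by apply: lt_le_trans Tb.
have a0 : 0 < a by apply: lt_le_trans ba.
apply: (@le_trans _ _ (Ds / a * (1 - (b ^+ 2)^-1 * (a - b) ^+ 2))).
  apply: ler_wpM2l; first by apply: divr_ge0 => //; exact: ltW.
  rewrite lerD2l lerN2; apply: ler_wpM2r; first exact: sqr_ge0.
  exact: inv_sq_le.
have E1 : Ds / a * (1 - (b ^+ 2)^-1 * (a - b) ^+ 2) = Ds * (2 * b - a) / b / b.
  field; rewrite ?lt0r_neq0 //.
have E2 : Du / b = Du * b / b / b by field; rewrite lt0r_neq0.
rewrite E1 E2; do 2 (apply: ler_wpM2r; first by rewrite invr_ge0 ltW).
have : Ds - Du <= Ds * (a - b) / b by rewrite mulrAC.
rewrite ler_pdivlMr // => H'.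
nra.
Qed.

Lemma arith2 (Ds Du a b T : R) : 0 < T -> T <= b -> b <= a -> 0 <= Du ->
  Du / a * (a - b) <= Ds - Du ->
  Du / b * (1 - (T ^+ 2)^-1 * (a - b) ^+ 2) <= Ds / a.
Proof.
move=> T0 Tb ba Du0 H.
have b0 : 0 < b by apply: lt_le_trans Tb.
have a0 : 0 < a by apply: lt_le_trans ba.
apply: (@le_trans _ _ (Du / b * (1 - (a ^+ 2)^-1 * (a - b) ^+ 2))).
  apply: ler_wpM2l; first by apply: divr_ge0 => //; exact: ltW.
  rewrite lerD2l lerN2; apply: ler_wpM2r; first exact: sqr_ge0.
  apply: inv_sq_le => //; exact: le_trans ba.
have E1 : Du / b * (1 - (a ^+ 2)^-1 * (a - b) ^+ 2) = Du * (2 * a - b) / a / a.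
  field; rewrite ?lt0r_neq0 //.
have E2 : Ds / a = Ds * a / a / a by field; rewrite lt0r_neq0.
rewrite E1 E2; do 2 (apply: ler_wpM2r; first by rewrite invr_ge0 ltW).
have : Du * (a - b) / a <= Ds - Du by rewrite mulrAC.
rewrite ler_pdivrMr // => H'.
nra.
Qed.
End A.

Section M.
Context {R : realType}.
Notation mu := (@lebesgue_measure R).

Lemma int_kf (f S : R -> R) s u k : is_density f S -> s <= u -> 0 <= k ->
  ((k * (S s - S u))%R%:E = \int[mu]_(x in `]s,u]) (k * f x)%R%:E)%E.
Proof.
move=> hd su k0; have [mf [f0 _]] := hd.
rewrite [LHS]EFinM (dens_split hd su).

under [RHS]eq_integral => x _ do rewrite EFinM.
rewrite ge0_integralZl //.
- by apply/measurable_realfun.measurable_EFinP; exact: measurable_funS mf.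
- by move=> x _; rewrite lee_fin.
Qed.

Lemma int_cmp1 (fD fI SD SI : R -> R) s u k : is_density fD SD -> is_density fI SI ->
  s <= u -> 0 <= k -> (forall x, s < x -> x <= u -> fD x <= k * fI x) ->
  SD s - SD u <= k * (SI s - SI u).
Proof.
move=> hd hi su k0 H.
have [mD [D0 _]] := hd; have [mI [I0 _]] := hi.
rewrite -lee_fin (dens_split hd su) (int_kf hi su k0).
apply: ge0_le_integral => //.
- by move=> x _; rewrite lee_fin.
- by apply/measurable_realfun.measurable_EFinP; exact: measurable_funS mD.
- apply/measurable_realfun.measurable_EFinP; apply: (@measurable_funS _ _ _ _ setT) => //.
  by apply: measurable_realfun.measurable_funM => //; exact: measurable_cst.
- by move=> x /=; rewrite in_itv /= => /andP[sx xu]; rewrite lee_fin; apply: H.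
Qed.

Lemma int_cmp2 (fD fI SD SI : R -> R) s u k : is_density fD SD -> is_density fI SI ->
  s <= u -> 0 <= k -> (forall x, s < x -> x <= u -> k * fI x <= fD x) ->
  k * (SI s - SI u) <= SD s - SD u.
Proof.
move=> hd hi su k0 H.
have [mD [D0 _]] := hd; have [mI [I0 _]] := hi.
rewrite -lee_fin (dens_split hd su) (int_kf hi su k0).
apply: ge0_le_integral => //.
- by move=> x _; rewrite lee_fin mulr_ge0.
- apply/measurable_realfun.measurable_EFinP; apply: (@measurable_funS _ _ _ _ setT) => //.
  by apply: measurable_realfun.measurable_funM => //; exact: measurable_cst.
- by apply/measurable_realfun.measurable_EFinP; exact: measurable_funS mD.
- by move=> x /=; rewrite in_itv /= => /andP[sx xu]; rewrite lee_fin; apply: H.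
Qed.

Lemma dens_at0 (f S : R -> R) : is_density f S -> (forall x, x < 0 -> S x = 1) -> S 0 = 1.
Proof.
move=> hd h1.
have S01 : S 0 <= 1 by rewrite -(h1 (-1)) ?ltrN10 //; apply: (dens_noninc hd); rewrite lerN10.
apply/eqP; rewrite eq_le S01 /=; rewrite leNgt; apply/negP => lt.
have cS := dens_cont hd (lerN10 R).
have hv : Num.min (S (-1)) (S 0) <= (1 + S 0) / 2 <= Num.max (S (-1)) (S 0).
  have nlt : (1 < S 0) = false by apply/negbTE; rewrite -leNgt ltW.
  rewrite h1 ?ltrN10 // /Num.min /Num.max nlt /=.
  apply/andP; split; lra.
have [c cin Sc] := IVT (lerN10 R) cS hv.
move: cin; rewrite in_itv /= => /andP[c1 c0].
move: c0; rewrite le_eqVlt => /orP[/eqP c0|c0].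
  by move: Sc; rewrite c0 => Sc; lra.
by move: Sc; rewrite h1 //; lra.
Qed.

Lemma arith3 (Ds a b w m : R) : 0 < Ds -> 0 < b -> b <= w -> w <= a ->
  m = Ds * (2 * b - a) / b -> 0 < m -> Ds - m / 2 <= Ds / w * (a - w) -> False.
Proof.
move=> D0 b0 bw wa me m0 H.
have w0 : 0 < w by apply: lt_le_trans bw.
have H1 : Ds / w * (a - w) = Ds * a / w - Ds by field; rewrite lt0r_neq0.
have H2 : Ds * a / w <= Ds * a / b.
  apply: ler_wpM2l; first by apply: mulr_ge0; [exact: ltW|lra].
  by rewrite lef_pV2 ?posrE.
have H3 : m = 2 * Ds - Ds * a / b by rewrite me; field; rewrite lt0r_neq0.
lra.
Qed.

End M.

End Helpers.
Import Helpers.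
Unset Implicit Arguments. Set Strict Implicit.

Theorem mainTheorem3 (d : measure_display) (Omega : measurableType d)
  (R : realType) (P : probability Omega R) (n : nat)
  (X : 'I_n -> {RV P >-> R}) (fD fI : R -> R) (t0 : R) :
  (forall i w, 0 <= X i w) ->
  is_density fD (survD X) ->
  is_density fI (survI X) ->
  (forall t, 0 <= t -> 0 < failure_rate fI (survI X) t) ->
  0 < t0 ->
  ((forall t, 0 <= t <= t0 ->
      rel_error (failure_rate fD (survD X) t) (failure_rate fI (survI X) t) <= 0) ->
    forall t, 0 <= t <= t0 -> 0 <= rel_error (survD X t) (survI X t)) /\
  ((forall t, 0 <= t <= t0 ->
      0 <= rel_error (failure_rate fD (survD X) t) (failure_rate fI (survI X) t)) ->
    forall t, 0 <= t <= t0 -> rel_error (survD X t) (survI X t) <= 0).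
Proof.
move=> X0 hd hi hr t00.
have neg1 : forall x, x < 0 -> survD X x = 1.
  move=> x x0; rewrite /survD.
  have -> : [set w : Omega | forall i, x < X i w]%classic = setT.
    by apply/seteqP; split => // w _ i; exact: lt_le_trans (X0 i w).
  by rewrite probability_setT.
have neg2 : forall x, x < 0 -> survI X x = 1.
  move=> x x0; rewrite /survI big1 // => i _.
  have -> : [set w : Omega | x < X i w]%classic = setT.
    by apply/seteqP; split => // w _; exact: lt_le_trans (X0 i w).
  by rewrite probability_setT.
have D0 := dens_at0 hd neg1.
have I0 := dens_at0 hi neg2.
set SD := survD X in hd neg1 D0 *.
set SI := survI X in hi neg2 I0 hr *.
have SIpos : forall x, 0 <= x -> 0 < SI x.
  move=> x x0; have := hr x x0; rewrite /failure_rate.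
  have := dens_ge0 x hi; rewrite le_eqVlt => /orP[/eqP <-|//].
  by rewrite invr0 mulr0 ltxx.
have SDge0 : forall x, 0 <= SD x by move=> x; exact: dens_ge0 x hd.
have mI : forall x y, x <= y -> SI y <= SI x.
  by move=> x y xy; exact: dens_noninc hi xy.
have mD : forall x y, x <= y -> SD y <= SD x.
  by move=> x y xy; exact: dens_noninc hd xy.
have fI0 : forall x, 0 <= fI x by case: hi => _ [].
have ar4 : forall r a a' p q : R, 0 <= r -> 0 <= a -> a <= a' -> 0 < q -> q <= p ->
    a / p * r <= a' / q * r.
  move=> r a a' p q r0 a0 aa q0 qp; apply: ler_wpM2r => //.
  apply: (@le_trans _ _ (a / q)).
    apply: ler_wpM2l => //; rewrite lef_pV2 ?posrE //; exact: lt_le_trans qp.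
  by apply: ler_wpM2r => //; rewrite invr_ge0 ltW.
split.
- move=> H t /andP[tp ttt].
  have SIt := SIpos t tp.
  set c := (SI t ^+ 2)^-1.
  have c0 : 0 <= c by rewrite /c invr_ge0 sqr_ge0.
  have dl0 : 0 < SI t / 2 by apply: divr_gt0.
  have hge0 : forall x, 0 <= x -> x <= t -> 0 <= SD x / SI x.
    by move=> x x0 _; apply: divr_ge0 => //; exact: ltW (SIpos x x0).
  have loc : forall s u, 0 <= s -> s <= u -> u <= t -> SI s - SI u <= SI t / 2 ->
      SD s / SI s * (1 - c * (SI s - SI u) ^+ 2) <= SD u / SI u.
    move=> s u s0 su ut hdl.
    have u0 : 0 <= u := le_trans s0 su.
    have SIu := SIpos u u0; have SIs := SIpos s s0.
    have tu : SI t <= SI u := mI u t ut.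
    have us : SI u <= SI s := mI s u su.
    have ptw : forall w x, s < x -> x <= w -> w <= t -> 0 < SD w ->
        fD x <= SD s / SI w * fI x.
      move=> w x sx xw wt SDw.
      have x0 : 0 <= x by apply: le_trans s0 (ltW sx).
      have xt0 : x <= t0 by apply: le_trans ttt; apply: le_trans xw wt.
      have Hx := H x (introT andP (conj x0 xt0)).
      have rI0 := hr x x0; rewrite /failure_rate in rI0.
      rewrite /rel_error /failure_rate ler_pdivrMr // mul0r subr_le0 -/SD -/SI in Hx.
      have SDx : 0 < SD x by apply: lt_le_trans SDw (mD x w xw).
      move: Hx; rewrite ler_pdivrMr // => Hx.
      apply: le_trans Hx _.
      rewrite [X in X <= _](_ : _ = SD x / SI x * fI x); last by ring.
      exact: (ar4 _ _ _ _ _ (fI0 x) (SDge0 x) (mD s x (ltW sx)) (SIpos w (le_trans x0 xw)) (mI x w xw)).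
    have A : forall w, s <= w -> w <= t -> 0 < SD w ->
        SD s - SD w <= SD s / SI w * (SI s - SI w).
      move=> w sw wt SDw; apply: (int_cmp1 hd hi sw).
        by apply: divr_ge0 => //; exact: ltW (SIpos w (le_trans s0 sw)).
      by move=> x sx xw; apply: ptw sx xw wt SDw.
    have [Ds0|Dspos] := eqVneq (SD s) 0.
      by rewrite Ds0 !mul0r; apply: divr_ge0 => //; exact: ltW.
    have Dsp : 0 < SD s by rewrite lt0r Dspos SDge0.
    have SDu : 0 < SD u.
      rewrite lt0r SDge0 andbT; apply/negP => /eqP SDu0.
      set m := SD s * (2 * SI u - SI s) / SI u.
      have m0 : 0 < m by rewrite /m; apply: divr_gt0 => //; apply: mulr_gt0 => //; lra.
      have mle : m <= SD s.
        rewrite /m -mulrA ger_pMr // ler_pdivrMr // mul1r; lra.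
      have hv : Num.min (SD s) (SD u) <= m / 2 <= Num.max (SD s) (SD u).
        have ns : (SD s < 0) = false by apply/negbTE; rewrite -leNgt.
        rewrite SDu0 /Num.min /Num.max ns; apply/andP; split; lra.
      have [w win Sw] := IVT su (dens_cont hd su) hv.
      move: win; rewrite in_itv /= => /andP[sw wu].
      have := A w sw (le_trans wu ut); rewrite Sw => /(_ (divr_gt0 m0 (ltr0Sn _ 1))) Aw.
      apply: (arith3 Dsp SIu (mI w u wu) (mI s w sw) (erefl m) m0 Aw).
    exact: arith1 SIt tu us (SDge0 s) (A u su ut SDu).
  have key := chain1 tp (dens_cont hi tp) (fun x y _ xy _ => mI x y xy) c0 dl0 hge0 loc.
  move: key; rewrite D0 I0 divr1 ler_pdivlMr // mul1r => key.
  by rewrite /rel_error; apply: divr_ge0; [rewrite subr_ge0 | exact: ltW].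
- move=> H t /andP[tp ttt].
  have SIt := SIpos t tp.
  set c := (SI t ^+ 2)^-1.
  have c0 : 0 <= c by rewrite /c invr_ge0 sqr_ge0.
  have hge0 : forall x, 0 <= x -> x <= t -> 0 <= SD x / SI x.
    by move=> x x0 _; apply: divr_ge0 => //; exact: ltW (SIpos x x0).
  have Hr : forall x, 0 <= x -> x <= t0 -> fI x / SI x <= fD x / SD x.
    move=> x x0 xt0; have Hx := H x (introT andP (conj x0 xt0)).
    have rI0 := hr x x0; rewrite /failure_rate in rI0.
    by rewrite /rel_error /failure_rate ler_pdivlMr // mul0r subr_ge0 -/SD -/SI in Hx.
  have SDpos : forall x, 0 <= x -> x <= t0 -> 0 < SD x.
    move=> x x0 xt0; have := lt_le_trans (hr x x0) (Hr x x0 xt0).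
    have := SDge0 x; rewrite le_eqVlt => /orP[/eqP <-|//].
    by rewrite invr0 mulr0 ltxx.
  have loc : forall s u, 0 <= s -> s <= u -> u <= t -> SI s - SI u <= 1 ->
      SD u / SI u * (1 - c * (SI s - SI u) ^+ 2) <= SD s / SI s.
    move=> s u s0 su ut _.
    have u0 : 0 <= u := le_trans s0 su.
    have SIu := SIpos u u0; have SIs := SIpos s s0.
    have tu : SI t <= SI u := mI u t ut.
    have us : SI u <= SI s := mI s u su.
    apply: arith2 SIt tu us (SDge0 u) _.
    apply: (int_cmp2 hd hi su); first by apply: divr_ge0 => //; exact: ltW.
    move=> x sx xu.
    have x0 : 0 <= x by apply: le_trans s0 (ltW sx).
    have xt0 : x <= t0 by apply: le_trans ttt; apply: le_trans xu ut.
    have SDx := SDpos x x0 xt0.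
    have := Hr x x0 xt0; rewrite ler_pdivlMr // => Hx.
    apply: le_trans Hx.
    rewrite [X in _ <= X](_ : _ = SD x / SI x * fI x); last by ring.
    exact: (ar4 _ _ _ _ _ (fI0 x) (SDge0 u) (mD x u xu) (SIpos x x0) (mI s x (ltW sx))).
  have key := chain2 tp (dens_cont hi tp) (fun x y _ xy _ => mI x y xy) c0 ltr01 hge0 loc.
  move: key; rewrite D0 I0 divr1 ler_pdivrMr // mul1r => key.
  by rewrite /rel_error ler_pdivrMr // mul0r subr_le0.
Qed.
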